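(* Let $\mathcal{R}:L^2(\mathcal{X},\mathcal{V},\hat P)\to\mathbb{R}$ be $\lambda$-strongly convex and $\Lambda$-strongly smooth, let $\mathcal{H}\subset L^2(\mathcal{X},\mathcal{V},\hat P)$ be a restriction set with edge $\gamma$, and let $f^*=\operatorname{argmin}_{f}\mathcal{R}[f]$. Given a starting point $f_0$ and constant step size $\eta_t=\frac1\Lambda$, after $T$ iterations of the Naive Gradient Projection Algorithm the iterate $f_T$ satisfies $$\mathcal{R}[f_T]-\mathcal{R}[f^*]\le\left(1-\frac{\gamma^2\lambda}{\Lambda}\right)^T\left(\mathcal{R}[f_0]-\mathcal{R}[f^*]\right).$$
   Context: $L^2(\mathcal{X},\mathcal{V},\hat P)$: for training points $x_1,\dots,x_N\in\mathcal{X}$ and a real inner-product space $\mathcal{V}$, the Hilbert space of (equivalence classes of) functions $f:\mathcal{X}\to\mathcal{V}$ with inner product $\langle f,g\rangle=\frac1N\sum_{n=1}^N\langle f(x_n),g(x_n)\rangle_{\mathcal{V}}$ and norm $\|f\|=\sqrt{\langle f,f\rangle}$. A subgradient of $\mathcal{R}$ at $f$ is any $\nabla$ with $\mathcal{R}[g]\ge\mathcal{R}[f]+\langle g-f,\nabla\rangle$ for all $g$; $\nabla\mathcal{R}[f]$ denotes a (the set of) subgradient(s). $\mathcal{R}$ is $\lambda$-strongly convex if $\mathcal{R}[f']\ge\mathcal{R}[f]+\langle\nabla\mathcal{R}[f],f'-f\rangle+\frac\lambda2\|f'-f\|^2$ for all $f,f'$, and $\Lambda$-strongly smooth if $\mathcal{R}[f']\le\mathcal{R}[f]+\langle\nabla\mathcal{R}[f],f'-f\rangle+\frac\Lambda2\|f'-f\|^2$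 for all $f,f'$ ($\lambda,\Lambda>0$). Edge: a set $\mathcal{H}$ has edge $\gamma\in[0,1]$ if for every $g$ there exists $h\in\mathcal{H}$ such that either $\langle g,h\rangle\ge\gamma\|g\|\|h\|$ or $\|g-h\|^2\le(1-\gamma^2)\|g\|^2$. Projecting $g$ onto $\mathcal{H}$: choosing $h^*\in\mathcal{H}$ either as a maximizer of $\langle g,h\rangle/\|h\|$ over $h\in\mathcal{H}$, or, when $\mathcal{H}$ is closed under scalar multiplication, as a minimizer of $\|g-h\|^2$ over $h\in\mathcal{H}$ (minimizers/maximizers assumed to exist). Naive Gradient Projection Algorithm: given $f_0$ and step sizes $\eta_t$, for $t=1,\dots,T$: compute a subgradient $\nabla_t\in\nabla\mathcal{R}[f_{t-1}]$, project $\nabla_t$ onto $\mathcal{H}$ obtaining $h^*$, and set $f_t=f_{t-1}-\eta_t\frac{\langle h^*,\nabla_t\rangle}{\|h^*\|^2}h^*$. *)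

(* Defs.v *)
From Stdlib Require Import Reals Lra Lia.
Open Scope R_scope.

Record InnerProductSpace := {
  ips_car :> Type;
  ips_zero : ips_car;
  ips_add : ips_car -> ips_car -> ips_car;
  ips_opp : ips_car -> ips_car;
  ips_scal : R -> ips_car -> ips_car;
  ips_inner : ips_car -> ips_car -> R;
  ips_addA : forall u v w, ips_add u (ips_add v w) = ips_add (ips_add u v) w;
  ips_addC : forall u v, ips_add u v = ips_add v u;
  ips_add0 : forall u, ips_add u ips_zero = u;
  ips_addN : forall u, ips_add u (ips_opp u) = ips_zero;
  ips_scal1 : forall u, ips_scal 1 u = u;
  ips_scalA : forall a b u, ips_scal a (ips_scal b u) = ips_scal (a * b) u;
  ips_scalDr : forall a u v, ips_scal a (ips_add u v) = ips_add (ips_scal a u) (ips_scal a v);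
  ips_scalDl : forall a b u, ips_scal (a + b) u = ips_add (ips_scal a u) (ips_scal b u);
  ips_innerC : forall u v, ips_inner u v = ips_inner v u;
  ips_innerDl : forall u v w, ips_inner (ips_add u v) w = ips_inner u w + ips_inner v w;
  ips_innerZl : forall a u v, ips_inner (ips_scal a u) v = a * ips_inner u v;
  ips_inner_ge0 : forall u, 0 <= ips_inner u u;
  ips_inner_eq0 : forall u, ips_inner u u = 0 -> u = ips_zero
}.

Fixpoint rsum (n : nat) (F : nat -> R) : R :=
  match n with
  | O => 0
  | S k => rsum k F + F k
  end.

Definition fadd {X : Type} (V : InnerProductSpace) (f g : X -> V) : X -> V :=
  fun y => ips_add V (f y) (g y).
Definition fscal {X : Type} (V : InnerProductSpace) (c : R) (f : X -> V) : X -> V :=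
  fun y => ips_scal V c (f y).
Definition fsub {X : Type} (V : InnerProductSpace) (f g : X -> V) : X -> V :=
  fun y => ips_add V (f y) (ips_opp V (g y)).

(* Inner product and norm of L^2(X, V, P_hat), for training points
   x 0, ..., x (N-1). *)
Definition l2inner {X : Type} (V : InnerProductSpace) (N : nat) (x : nat -> X)
  (f g : X -> V) : R :=
  / INR N * rsum N (fun n => ips_inner V (f (x n)) (g (x n))).
Definition l2norm {X : Type} (V : InnerProductSpace) (N : nat) (x : nat -> X)
  (f : X -> V) : R :=
  sqrt (l2inner V N x f f).

Section Defs.
Context {X : Type} (V : InnerProductSpace) (N : nat) (x : nat -> X).
Local Notation inner := (l2inner V N x).
Local Notation norm := (l2norm V N x).

Definition is_subgradient (Rk : (X -> V) -> R) (f nabla : X -> V) : Prop :=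
  forall g, Rk g >= Rk f + inner (fsub V g f) nabla.

Definition strongly_convex (Rk : (X -> V) -> R) (lam : R) : Prop :=
  forall f f' nabla, is_subgradient Rk f nabla ->
    Rk f' >= Rk f + inner nabla (fsub V f' f) + lam / 2 * (norm (fsub V f' f)) ^ 2.

Definition strongly_smooth (Rk : (X -> V) -> R) (Lam : R) : Prop :=
  forall f f' nabla, is_subgradient Rk f nabla ->
    Rk f' <= Rk f + inner nabla (fsub V f' f) + Lam / 2 * (norm (fsub V f' f)) ^ 2.

(* H has edge gamma (the h in the first alternative must be nonzero, so that
   the correlation <g,h>/||h|| is meaningful). *)
Definition has_edge (H : (X -> V) -> Prop) (gamma : R) : Prop :=
  0 <= gamma <= 1 /\
  forall g, exists h, H h /\
    ((0 < norm h /\ inner g h >= gamma * norm g * norm h) \/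
     (norm (fsub V g h)) ^ 2 <= (1 - gamma ^ 2) * (norm g) ^ 2).

Definition closed_under_scaling (H : (X -> V) -> Prop) : Prop :=
  forall c h, H h -> H (fscal V c h).

(* h is a projection of g onto H (either of the two allowed rules). *)
Definition is_projection (H : (X -> V) -> Prop) (g h : X -> V) : Prop :=
  H h /\
  ((0 < norm h /\
    forall h', H h' -> 0 < norm h' -> inner g h' / norm h' <= inner g h / norm h)
   \/
   (closed_under_scaling H /\
    forall h', H h' -> (norm (fsub V g h)) ^ 2 <= (norm (fsub V g h')) ^ 2)).

(* f 0, ..., f T are the iterates of the Naive Gradient Projection Algorithm
   with step sizes eta, subgradients grad t and projections hp t (t = 1..T). *)
Definition ngp_iterates (Rk : (X -> V) -> R) (H : (X -> V) -> Prop)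
  (eta : nat -> R) (T : nat) (f grad hp : nat -> X -> V) : Prop :=
  forall t, (1 <= t <= T)%nat ->
    is_subgradient Rk (f (t - 1)%nat) (grad t) /\
    is_projection H (grad t) (hp t) /\
    forall y, f t y =
      fsub V (f (t - 1)%nat)
        (fscal V (eta t * (inner (hp t) (grad t) / (norm (hp t)) ^ 2)) (hp t)) y.
End Defs.

(* Main.v *)
Require Import Defs.
From Stdlib Require Import Reals Lra Lia Psatz FunctionalExtensionality.
Open Scope R_scope.

Section L.
Context (V : InnerProductSpace).
Context (X : Type).
Context (N : nat).
Context (x : nat -> X).

Lemma inner_0l v : ips_inner V (ips_zero V) v = 0.
Proof. pose proof (ips_innerDl V (ips_zero V) (ips_zero V) v) as HH. rewrite ips_add0 in HH. lra. Qed.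

Lemma inner_oppl u v : ips_inner V (ips_opp V u) v = - ips_inner V u v.
Proof. pose proof (ips_innerDl V u (ips_opp V u) v) as HH. rewrite ips_addN, inner_0l in HH. lra. Qed.

Lemma rsum_ext n F G : (forall k, F k = G k) -> rsum n F = rsum n G.
Proof. intros H; induction n; simpl; [reflexivity| rewrite IHn, H; reflexivity]. Qed.

Lemma rsum_plus n F G : rsum n (fun k => F k + G k) = rsum n F + rsum n G.
Proof. induction n; simpl; [ring| rewrite IHn; ring]. Qed.

Lemma rsum_scal n c F : rsum n (fun k => c * F k) = c * rsum n F.
Proof. induction n; simpl; [ring| rewrite IHn; ring]. Qed.

Lemma rsum_ge0 n F : (forall k, 0 <= F k) -> 0 <= rsum n F.
Proof. intros H; induction n; simpl; [lra| specialize (H n); lra]. Qed.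

Local Notation I := (l2inner V N x).
Local Notation nrm := (l2norm V N x).

Lemma I_sym f g : I f g = I g f.
Proof. unfold l2inner. f_equal. apply rsum_ext; intro; apply ips_innerC. Qed.

Lemma I_subl f g h : I (fsub V f g) h = I f h - I g h.
Proof.
  unfold l2inner, fsub.
  rewrite (rsum_ext _ _ (fun k => ips_inner V (f (x k)) (h (x k)) + (-1) * ips_inner V (g (x k)) (h (x k)))).
  - rewrite rsum_plus, rsum_scal. ring.
  - intro k. rewrite ips_innerDl, inner_oppl. ring.
Qed.

Lemma I_scall c f h : I (fscal V c f) h = c * I f h.
Proof.
  unfold l2inner, fscal.
  rewrite (rsum_ext _ _ (fun k => c * ips_inner V (f (x k)) (h (x k)))).
  - rewrite rsum_scal. ring.
  - intro k. apply ips_innerZl.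
Qed.

Lemma I_subr f g h : I h (fsub V f g) = I h f - I h g.
Proof. rewrite I_sym, I_subl, (I_sym f), (I_sym g). reflexivity. Qed.

Lemma I_scalr c f h : I h (fscal V c f) = c * I h f.
Proof. rewrite I_sym, I_scall, (I_sym f). reflexivity. Qed.

Lemma I_ge0 f : 0 <= I f f.
Proof.
  unfold l2inner. apply Rmult_le_pos.
  - destruct N. simpl. rewrite Rinv_0; lra. left; apply Rinv_0_lt_compat, lt_0_INR; lia.
  - apply rsum_ge0; intro; apply ips_inner_ge0.
Qed.

Lemma nrm_ge0 f : 0 <= nrm f.
Proof. apply sqrt_pos. Qed.

Lemma nrm_sq f : nrm f ^ 2 = I f f.
Proof. unfold l2norm. apply pow2_sqrt, I_ge0. Qed.

Lemma I_subsub f g : I (fsub V f g) (fsub V f g) = I f f - 2 * I f g + I g g.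
Proof. rewrite !I_subl, !I_subr, (I_sym g f). ring. Qed.

Lemma quad a b c : (forall t, 0 <= a - 2 * t * b + t * t * c) -> 0 <= c -> b * b <= a * c.
Proof.
  intros H Hc. destruct Hc as [Hc|Hc].
  - specialize (H (b / c)).
    assert (E : a - 2 * (b/c) * b + (b/c)*(b/c)*c = (a * c - b * b) / c) by (field; lra).
    rewrite E in H. apply Rmult_le_compat_r with (r := c) in H; [|lra].
    unfold Rdiv in H. rewrite Rmult_assoc, Rinv_l in H; lra.
  - subst c. destruct (Req_dec b 0) as [Hb|Hb]. subst; nra.
    specialize (H ((a+1)/(2*b))).
    assert (E : a - 2 * ((a+1)/(2*b)) * b + ((a+1)/(2*b))*((a+1)/(2*b))*0 = -1) by (field; lra).
    lra.
Qed.

Lemma CS u v : I u v * I u v <= I u u * I v v.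
Proof.
  apply quad; [|apply I_ge0]. intro t.
  pose proof (I_ge0 (fsub V u (fscal V t v))) as HH.
  rewrite I_subsub, !I_scall, !I_scalr in HH. nra.
Qed.

End L.

Section L2.
Context (V : InnerProductSpace).
Context (X : Type).
Context (N : nat).
Context (x : nat -> X).
Local Notation I := (l2inner V N x).
Local Notation nrm := (l2norm V N x).

Lemma edge_good H gamma g : has_edge V N x H gamma ->
  gamma * nrm g = 0 \/ exists h0, H h0 /\ 0 < nrm h0 /\ I g h0 >= gamma * nrm g * nrm h0.
Proof.
  intros [Hg He]. destruct (He g) as [h0 [Hh0 [[Hp Hi]|Hb]]].
  - right. exists h0. auto.
  - rewrite !nrm_sq, I_subsub in Hb.
    pose proof (nrm_sq V X N x g) as Ea. pose proof (nrm_sq V X N x h0) as Eb.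
    pose proof (nrm_ge0 V X N x g) as Pa. pose proof (nrm_ge0 V X N x h0) as Pb.
    set (a := nrm g) in *. set (b := nrm h0) in *.
    destruct Pb as [Pb|Pb].
    + right. exists h0. split; [auto|split;[auto|]].
      rewrite <- Ea, <- Eb in Hb. pose proof (pow2_ge_0 (gamma*a - b)). change (nrm h0) with b. nra.
    + left. rewrite <- Pb in Eb.
      pose proof (CS V X N x g h0) as C. rewrite <- Eb in C.
      assert (I g h0 = 0) by nra. rewrite <- Ea, <- Eb in Hb. nra.
Qed.

Lemma Q_ge0 s n : 0 <= n -> 0 <= s * s / n.
Proof.
  intros [Hn|Hn]. apply Rmult_le_pos; [nra| left; apply Rinv_0_lt_compat; lra].
  subst. unfold Rdiv. rewrite Rinv_0. lra.
Qed.

Lemma key H gamma g h : has_edge V N x H gamma -> is_projection V N x H g h ->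
  gamma ^ 2 * nrm g ^ 2 <= I h g * I h g / nrm h ^ 2.
Proof.
  intros HE [Hh [[Hp Hmax]|[Hcl Hmin]]]; pose proof HE as [[G0 G1] _];
  pose proof (nrm_ge0 V X N x g) as Pa;
  destruct (edge_good H gamma g HE) as [Z|[h0 [Hh0 [Pb Hi]]]].
  - apply Rle_trans with 0; [nra|]. apply Q_ge0. nra.
  - specialize (Hmax h0 Hh0 Pb).
    assert (Hr : gamma * nrm g <= I g h0 / nrm h0).
    { apply Rmult_le_reg_r with (nrm h0); [lra|]. replace (I g h0 / nrm h0 * nrm h0) with (I g h0) by (field; lra). lra. }
    assert (E : I h g * I h g / nrm h ^ 2 = (I g h / nrm h) * (I g h / nrm h)).
    { rewrite (I_sym V X N x h g). field. lra. }
    rewrite E. assert (0 <= gamma * nrm g) by nra. nra.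
  - apply Rle_trans with 0; [nra|]. apply Q_ge0. rewrite nrm_sq. apply I_ge0.
  - rewrite !nrm_sq in *.
    assert (Hs : forall c, I g g - 2 * I g h + I h h <= I g g - 2 * c * I g h + c * c * I h h).
    { intro c. specialize (Hmin _ (Hcl c h Hh)). rewrite !nrm_sq, !I_subsub, !I_scall, !I_scalr in Hmin.
      lra. }
    assert (Esn : I g h = I h h).
    { destruct (I_ge0 V X N x h) as [Hn|Hn].
      - specialize (Hs (I g h / I h h)).
        assert (E : I g g - 2 * (I g h / I h h) * I g h + I g h / I h h * (I g h / I h h) * I h h
                  = I g g - I g h * I g h / I h h) by (field; lra).
        rewrite E in Hs.
        assert (Hs2 : I g h * I g h / I h h <= 2 * I g h - I h h) by lra.
        apply Rmult_le_compat_r with (r := I h h) in Hs2; [|lra].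
        replace (I g h * I g h / I h h * I h h) with (I g h * I g h) in Hs2 by (field; lra). nra.
      - pose proof (CS V X N x g h) as C. rewrite <- Hn in *. nra. }
    pose proof (nrm_sq V X N x h0) as Eb. pose proof (nrm_sq V X N x g) as Ea.
    set (b := nrm h0) in *. set (a := nrm g) in *.
    specialize (Hs (I g h0 / (b * b))).
    pose proof (Hmin _ (Hcl (I g h0 / (b*b)) h0 Hh0)) as Hm.
    rewrite !nrm_sq, !I_subsub, !I_scall, !I_scalr in Hm.
    assert (E : I g g - 2 * I g h + I h h <= I g g - I g h0 * I g h0 / (b * b)).
    { replace (I g g - I g h0 * I g h0 / (b * b)) with
        (I g g - 2 * (I g h0 / (b * b) * I g h0) + I g h0 / (b * b) * (I g h0 / (b * b) * I h0 h0)).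
      exact Hm. rewrite <- Eb. field. lra. }
    assert (F : gamma * a * b * (gamma * a * b) <= I g h0 * I g h0) by (assert (0 <= gamma*a*b) by (apply Rmult_le_pos; [apply Rmult_le_pos|]; lra); apply Rmult_le_compat; lra).
    assert (F2 : gamma * a * (gamma * a) <= I g h0 * I g h0 / (b * b)).
    { apply Rmult_le_reg_r with (b*b); [nra|]. replace (I g h0 * I g h0 / (b * b) * (b * b)) with (I g h0 * I g h0) by (field; lra). nra. }
    rewrite <- Esn in E.
    assert (Hn : gamma ^ 2 * a ^ 2 <= I g h) by (rewrite <- Ea in *; nra).
    rewrite (I_sym V X N x h g), <- Esn.
    destruct (I_ge0 V X N x h) as [Hp|Hp].
    + rewrite <- Esn in Hp. replace (I g h * I g h / I g h) with (I g h) by (field; lra). rewrite <- Ea. lra.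
    + rewrite <- Esn in Hp. rewrite <- Hp in *. unfold Rdiv. rewrite Rinv_0. nra.
Qed.

End L2.

Lemma step (V : InnerProductSpace) (X : Type) (N : nat) (x : nat -> X)
  (Rk : (X -> V) -> R) (lam Lam : R) (Hlam : 0 < lam) (HLam : 0 < Lam)
  (Hconv : strongly_convex V N x Rk lam) (Hsmooth : strongly_smooth V N x Rk Lam)
  (H : (X -> V) -> Prop) (gamma : R) (Hedge : has_edge V N x H gamma)
  (fstar : X -> V) (T : nat) (f grad hp : nat -> X -> V)
  (Hrun : ngp_iterates V N x Rk H (fun _ => / Lam) T f grad hp) (t : nat) :
  (1 <= t <= T)%nat ->
  Rk (f t) - Rk fstar <= (Rk (f (t-1)%nat) - Rk fstar)
      - gamma ^ 2 * lam / Lam * (Rk (f (t-1)%nat) - Rk fstar).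
Proof.
  intros Ht. destruct (Hrun t Ht) as [Hsub [Hproj Hf]].
  set (g := grad t) in *. set (h := hp t) in *. set (p := f (t-1)%nat) in *.
  set (I := l2inner V N x). set (nrm := l2norm V N x).
  set (c := / Lam * (I h g / nrm h ^ 2)) in *.
  assert (Hft : f t = fsub V p (fscal V c h)) by (extensionality y; apply Hf).
  pose proof (Hsmooth p (f t) g Hsub) as Sm.
  assert (E1 : I g (fsub V (f t) p) = - c * I g h).
  { rewrite Hft. unfold I. rewrite !I_subr, I_scalr. ring. }
  assert (E2 : nrm (fsub V (f t) p) ^ 2 = c * c * I h h).
  { rewrite Hft. unfold nrm, I. rewrite nrm_sq. repeat first [rewrite I_subsub | rewrite I_subl | rewrite I_subr | rewrite I_scall | rewrite I_scalr].
    rewrite (I_sym V X N x h p). ring. }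
  fold I nrm in Sm. rewrite E1, E2 in Sm.
  assert (Hn : nrm h ^ 2 = I h h) by apply nrm_sq.
  assert (Es : I h g = I g h) by apply I_sym.
  assert (E3 : - c * I g h + Lam / 2 * (c * c * I h h) = - (I h g * I h g / nrm h ^ 2) / (2 * Lam)).
  { unfold c. rewrite Hn, Es. destruct (I_ge0 V X N x h) as [Hp|Hp].
    - fold I in Hp. field. split; lra.
    - fold I in Hp. rewrite <- Hp. unfold Rdiv. rewrite Rinv_0. ring. }
  assert (Sm2 : Rk (f t) <= Rk p + - (I h g * I h g / nrm h ^ 2) / (2 * Lam)) by (rewrite <- E3; lra). clear Sm. rename Sm2 into Sm.
  pose proof (key V X N x H gamma g h Hedge Hproj) as K. fold I nrm in K.
  pose proof (Hconv p fstar g Hsub) as Cv. fold I nrm in Cv.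
  pose proof (CS V X N x g (fsub V fstar p)) as C.
  rewrite <- (nrm_sq V X N x g), <- (nrm_sq V X N x (fsub V fstar p)) in C. fold I nrm in C.
  pose proof (nrm_ge0 V X N x g) as PA. pose proof (nrm_ge0 V X N x (fsub V fstar p)) as PB.
  fold nrm in PA, PB.
  set (A := nrm g) in *. set (B := nrm (fsub V fstar p)) in *.
  set (s := I g (fsub V fstar p)) in *.
  assert (Hs : s >= - (A * B)).
  { destruct (Rge_or_gt s (- (A*B))) as [|Hlt]; auto. exfalso. assert (0 <= A*B) by (apply Rmult_le_pos; lra). assert (0 < (s - A*B)*(s + A*B)) by (apply Rmult_neg_neg; lra). nra. }
  assert (Hc : 2 * lam * (Rk p - Rk fstar) <= A ^ 2).
  { pose proof (pow2_ge_0 (lam * B - A)). nra. }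
  set (Q := I h g * I h g / nrm h ^ 2) in *.
  assert (HQ : 2 * lam * gamma ^ 2 * (Rk p - Rk fstar) <= Q).
  { assert (0 <= gamma ^ 2) by apply pow2_ge_0. nra. }
  assert (HQ2 : gamma ^ 2 * lam / Lam * (Rk p - Rk fstar) <= Q / (2 * Lam)).
  { apply Rmult_le_reg_r with (2 * Lam); [lra|].
    replace (Q / (2 * Lam) * (2 * Lam)) with Q by (field; lra).
    replace (gamma ^ 2 * lam / Lam * (Rk p - Rk fstar) * (2 * Lam))
      with (2 * lam * gamma ^ 2 * (Rk p - Rk fstar)) by (field; lra). lra. }

  lra.
Qed.

Theorem theorem3 (V : InnerProductSpace) (X : Type) (N : nat) (x : nat -> X)
  (HN : (0 < N)%nat)
  (Rk : (X -> V) -> R) (lam Lam : R) (Hlam : 0 < lam) (HLam : 0 < Lam)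
  (Hconv : strongly_convex V N x Rk lam) (Hsmooth : strongly_smooth V N x Rk Lam)
  (H : (X -> V) -> Prop) (gamma : R) (Hedge : has_edge V N x H gamma)
  (fstar : X -> V) (Hfstar : forall f, Rk fstar <= Rk f)
  (T : nat) (f grad hp : nat -> X -> V)
  (Hrun : ngp_iterates V N x Rk H (fun _ => / Lam) T f grad hp) :
  Rk (f T) - Rk fstar <= (1 - gamma ^ 2 * lam / Lam) ^ T * (Rk (f 0%nat) - Rk fstar).
Proof.
  set (q := 1 - gamma ^ 2 * lam / Lam).
  assert (St : forall t, (1 <= t <= T)%nat ->
     Rk (f t) - Rk fstar <= q * (Rk (f (t-1)%nat) - Rk fstar) /\
     Rk (f t) - Rk fstar <= Rk (f (t-1)%nat) - Rk fstar).
  { intros t Ht.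
    pose proof (step V X N x Rk lam Lam Hlam HLam Hconv Hsmooth H gamma Hedge fstar T f grad hp Hrun t Ht) as S.
    pose proof (Hfstar (f (t-1)%nat)).
    assert (0 <= gamma ^ 2 * lam / Lam * (Rk (f (t-1)%nat) - Rk fstar)).
    { apply Rmult_le_pos; [|lra]. unfold Rdiv. apply Rmult_le_pos; [apply Rmult_le_pos|].
      apply pow2_ge_0. lra. left; apply Rinv_0_lt_compat; lra. }
    split; [|lra]. unfold q.
    replace ((1 - gamma ^ 2 * lam / Lam) * (Rk (f (t - 1)%nat) - Rk fstar)) with
      ((Rk (f (t-1)%nat) - Rk fstar) - gamma ^ 2 * lam / Lam * (Rk (f (t-1)%nat) - Rk fstar)) by ring.
    exact S. }
  pose proof (Hfstar (f 0%nat)) as H0.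
  destruct T as [|T]. { simpl. lra. }
  destruct (Req_dec (Rk (f 0%nat) - Rk fstar) 0) as [Z|NZ].
  - assert (M : forall k, (k <= S T)%nat -> Rk (f k) - Rk fstar <= 0).
    { induction k; intros Hk. lra.
      destruct (St (S k)) as [_ S2]. lia. replace (S k - 1)%nat with k in S2 by lia.
      pose proof (IHk ltac:(lia)). lra. }
    rewrite Z, Rmult_0_r. apply M. lia.
  - assert (Hq : 0 <= q).
    { destruct (St 1%nat) as [S1 _]. lia. simpl in S1. pose proof (Hfstar (f 1%nat)).
      destruct (Rle_or_lt 0 q); auto. exfalso.
      assert (q * (Rk (f 0%nat) - Rk fstar) < 0) by (apply Rmult_neg_pos; lra). lra. }
    assert (M : forall k, (k <= S T)%nat -> Rk (f k) - Rk fstar <= q ^ k * (Rk (f 0%nat) - Rk fstar)).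
    { induction k; intros Hk. simpl; lra.
      destruct (St (S k)) as [S1 _]. lia. replace (S k - 1)%nat with k in S1 by lia.
      pose proof (IHk ltac:(lia)).
      simpl. rewrite Rmult_assoc. eapply Rle_trans; [exact S1|]. apply Rmult_le_compat_l; auto. }
    apply M. lia.
Qed.
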